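(* Let $$\mathcal L^H=\sum_{k,\alpha}\rho^\alpha_k\Big\langle\mathcal O^{(k)}_\alpha\exp\Big(\sum_{m,\beta}\lambda^\beta_m\mathcal O^{(m)}_\beta\Big)\Big\rangle_0\in\mathbb C[[\partial_z^m\lambda^\alpha_k,\partial_z^m\rho^\alpha_k]].$$ Then $\oint_C\mathscr J^{(1)}_{\mathcal L^H}$ satisfies the Maurer--Cartan equation in $(\mathrm{Obs}^{\oint_C},\delta,\{-,-\}_C)$: $$\delta\oint_C\mathscr J^{(1)}_{\mathcal L^H}+\tfrac12\Big\{\oint_C\mathscr J^{(1)}_{\mathcal L^H},\oint_C\mathscr J^{(1)}_{\mathcal L^H}\Big\}_C=0.$$
   Context: Genus zero data: $H$ finite-dimensional purely even complex vector space with basis $\{\mathcal O_\alpha\}$, distinguished $P=\mathcal O_1$, $\mathcal O^{(k)}_\alpha=t^k\mathcal O_\alpha$; symmetric multilinear genus zero correlators $\langle\mathcal O^{(k_1)}_{\alpha_1}\cdots\mathcal O^{(k_n)}_{\alpha_n}\rangle_0\in\mathbb C$ vanishing for $n<3$, with $g_{\alpha\beta}=\langle\mathcal O_\alpha\mathcal O_\beta P\rangle_0$ nondegenerate (inverse $g^{\alpha\beta}$, used to raise indices), satisfying the genus zero topological recursion relation $\langle\langle\mathcal O^{(i+1)}_\alpha\mathcal O^{(j)}_\beta\mathcal O^{(k)}_\gamma\rangle\rangle_0=\sum_\sigma\langle\langle\mathcal O^{(i)}_\alpha\mathcal O^{(0)\sigma}\rangle\rangle_0\langle\langle\mathcal O^{(0)}_\sigma\mathcal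 O^{(j)}_\beta\mathcal O^{(k)}_\gamma\rangle\rangle_0$, where $\langle\langle\cdots\rangle\rangle_0(\mathbf b)=\langle\cdots e^{\sum b^\alpha_k\mathcal O^{(k)}_\alpha}\rangle_0$. In $\mathcal L^H$ the exponential is expanded and the correlator applied multilinearly, producing a formal power series in the symbols. Setting on $\mathbb C^\times=\mathbb C/(z\sim z+1)$ with form $dz$: fields $\mathcal E^H=(\mathrm{PV}(\mathbb C^\times)\otimes H)[[t]]$, $\mu=\sum(\lambda^\alpha_k\otimes\mathcal O_\alpha t^k+\rho^\alpha_k\partial_z\otimes\mathcal O_\alpha t^k)$, $\lambda^\alpha_k,\rho^\alpha_k\in\Omega^{0,\bullet}(\mathbb C^\times)$, $t$ of degree 2, $\mathrm{PV}^{i,j}$ in degree $i+j$. Trace $\mathrm{Tr}(\mu)=\int(\mu\vdash dz)\wedge dz$; BV kernel $K_0=\sum_\alpha(\mathcal O^\alpha\otimes\mathcal O_\alpha)\partial_z\delta(z-w)(d\bar z-d\bar w)$. $\mathbb C[[\partial_z^m\lambda^\alpha_k,\partial_z^m\rho^\alpha_k]]$: formal power series in even $\partial_z^m\lambda^\alpha_k$ and odd $\partial_z^m\rho^\alpha_k$, with derivation $\partial_z$; differential $\delta$: odd derivation commuting with $\partial_z$, $\delta\lambda^\alpha_k=\partial_z\rho^\alpha_{k-1}$ ($k\ge1$), $\delta\lambda^\alpha_0=0$, $\delta\rho^\alpha_k=0$. $\mathscr J_{\mathcal L}=dz\,\mathcal L(\partial_z^m\lambda^\alpha_k,\partial_z^m\rho^\alpha_k)$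 (an $\Omega^{\bullet,\bullet}(\mathbb C^\times)$-valued function on fields), with 1-form and 2-form parts $\mathscr J^{(1)}_{\mathcal L},\mathscr J^{(2)}_{\mathcal L}$; $C=\{z\in[0,1]\}$. $\mathrm{Obs}^{\oint_C}=\{\oint_C\mathscr J^{(1)}_{\mathcal L}\}$ with differential $\oint_C\mathscr J^{(1)}_{\mathcal L}\mapsto\oint_C\mathscr J^{(1)}_{\delta\mathcal L}$ and bracket $\{\oint_C\mathscr J^{(1)}_{\mathcal L_1},\oint_C\mathscr J^{(1)}_{\mathcal L_2}\}_C:=\{\int_{\mathbb C^\times}\mathscr J^{(2)}_{\mathcal L_1},\oint_C\mathscr J^{(1)}_{\mathcal L_2}\}_{BV}$, where $\{S,\mathcal O\}_{BV}$ is the derivative of the observable $\mathcal O$ along the field transformation obtained by contracting $K_0$ with the functional derivative of the local functional $S$; concretely $\{\oint_C\mathscr J^{(1)}_{\mathcal L_1},\oint_C\mathscr J^{(1)}_{\mathcal L_2}\}_C=\oint_C\mathscr J^{(1)}_{[\mathcal L_1,\mathcal L_2]}$ with $[\mathcal L_1,\mathcal L_2]=\sum_{\alpha,\beta,k,m}\{(-\partial_z)^k\frac{\partial\mathcal L_1}{\partial(\partial_z^k\lambda^\alpha_0)}\}g^{\alpha\beta}\partial_z\{(-\partial_z)^m\frac{\partial\mathcal L_2}{\partial(\partial_z^m\lambda^\beta_0)}\}$. *)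

(* Defs.v *)
From HB Require Import structures.
From mathcomp Require Import all_boot all_algebra complex reals.
Set Implicit Arguments. Unset Strict Implicit. Unset Printing Implicit Defensive.
Import GRing.Theory.
Local Open Scope ring_scope.

(* Basis of H: O_alpha, alpha : 'I_n.+1 ; the distinguished P = O_1 is the  *)
(* basis vector with index ord0.  An insertion O^{(k)}_alpha = t^k O_alpha  *)
(* is the pair (alpha, k).                                                  *)
Definition ins (n : nat) := ('I_n.+1 * nat)%type.

(* The symbol d_z^m lambda^alpha_k (resp. d_z^m rho^alpha_k) is the triple
   ((alpha, k), m); the even variables are the lambda's, the odd ones the
   rho's (both indexed by fvar n). *)
Definition fvar (n : nat) := (ins n * nat)%type.

(* Formal power series over K in (countably many) even variables of type E  *)
(* and odd variables of type O, represented by their Taylor coefficients:   *)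
(*   F  <->  sum_{p,q} 1/(p! q!) sum_{es,os} F es os . e_1..e_p o_1..o_q,    *)
(* i.e. F es os = (d_{e_1}..d_{e_p} d_{o_1}..d_{o_q} F)(0), left derivatives.*)
Definition sps (K : Type) (E O : Type) := seq E -> seq O -> K.

Definition sps_wf (K : ringType) (E O : eqType) (F : sps K E O) : Prop :=
  (forall es es' os, perm_eq es es' -> F es os = F es' os) /\
  (forall es pre o1 o2 post,
      F es (pre ++ o1 :: o2 :: post) = - F es (pre ++ o2 :: o1 :: post)).

Section SuperSeries.
Variables (K : ringType) (E O : Type).

Definition sps_add (F G : sps K E O) : sps K E O := fun es os => F es os + G es os.
Definition sps_scale (c : K) (F : sps K E O) : sps K E O := fun es os => c * F es os.

(* number of pairs i < j with b_i = false, b_j = true: the number of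
   transpositions needed to move the selected odd variables to the front *)
Fixpoint inv_count (b : seq bool) : nat :=
  match b with
  | [::] => 0
  | x :: b' => (if x then 0 else count id b') + inv_count b'
  end.

(* super-commutative product (Leibniz rule on Taylor coefficients) *)
Definition sps_mul (F G : sps K E O) : sps K E O := fun es os =>
  \sum_(a : (size es).-tuple bool) \sum_(b : (size os).-tuple bool)
    (-1) ^+ inv_count b * F (mask a es) (mask b os)
                        * G (mask (map negb a) es) (mask (map negb b) os).

Definition sps_dE (v : E) (F : sps K E O) : sps K E O := fun es os => F (v :: es) os.
Definition sps_dO (v : O) (F : sps K E O) : sps K E O := fun es os => F es (v :: os).
End SuperSeries.

Definition FPS (R : realType) (n : nat) := sps R[i] (fvar n) (fvar n).

Fixpoint unshifts (n : nat) (s : seq (fvar n)) : seq (seq (fvar n)) :=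
  match s with
  | [::] => [::]
  | x :: s' =>
      (if x.2 is m.+1 then [:: (x.1, m) :: s'] else [::])
        ++ map (cons x) (unshifts s')
  end.

(* the (even) derivation d_z : d_z^m v |-> d_z^{m+1} v on all variables.
   Taylor coefficients: d_{y_1}..d_{y_p}(d_z F)(0) = sum_i d_{y_1}..
   d_{unshift y_i}..d_{y_p} F (0). *)
Definition dz (R : realType) (n : nat) (F : FPS R n) : FPS R n := fun es os =>
  \sum_(es' <- unshifts es) F es' os + \sum_(os' <- unshifts os) F es os'.

Definition rem_at (T : Type) (i : nat) (s : seq T) := take i s ++ drop i.+1 s.

(* the odd derivation delta, commuting with d_z, with
   delta lambda^alpha_k = d_z rho^alpha_{k-1} (k >= 1), delta lambda^alpha_0 = 0,
   delta rho = 0; hence delta (d_z^m lambda^alpha_{k+1}) = d_z^{m+1} rho^alpha_k,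
   i.e. delta = sum_v delta(v) . d/dv (v even). *)
Definition deltaS (R : realType) (n : nat) (F : FPS R n) : FPS R n := fun es os =>
  \sum_(i < size os)
    (-1) ^+ i * (match nth ((ord0, 0%N), 0%N) os i with
                 | ((a, k), m.+1) => F (((a, k.+1), m) :: es) (rem_at i os)
                 | _ => 0
                 end).

Definition weight (n : nat) (es os : seq (fvar n)) : nat :=
  sumn (map snd es) + sumn (map snd os).

(* Euler-Lagrange derivative  sum_k (-d_z)^k dF/d(d_z^k lambda^alpha_0).
   The coefficient of this infinite sum at (es, os) only receives
   contributions from k <= weight es os (as d_z^k G has vanishing
   coefficients at monomials of weight < k), so the sum is finite. *)
Definition EL (R : realType) (n : nat) (alpha : 'I_n.+1) (F : FPS R n) : FPS R n :=
  fun es os =>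
    \sum_(k < (weight es os).+1)
      (-1) ^+ k * iter k (@dz R n) (sps_dE ((alpha, 0%N), (k : nat)) F) es os.

Definition correlator (R : realType) (n : nat) := seq (ins n) -> R[i].

Definition gmet (R : realType) (n : nat) (corr : correlator R n) : 'M[R[i]]_n.+1 :=
  \matrix_(a, b) corr [:: (a, 0%N); (b, 0%N); (ord0, 0%N)].

Definition ginv (R : realType) (n : nat) (corr : correlator R n) : 'M[R[i]]_n.+1 :=
  invmx (gmet corr).

(* << X >>_0 (b) = < X exp(sum b^beta_m O^{(m)}_beta) >_0, a formal power
   series in the even variables b^beta_m (indexed by ins n), no odd ones;
   its Taylor coefficient at (beta_1,m_1)..(beta_p,m_p) is
   < X O^{(m_1)}_{beta_1} .. O^{(m_p)}_{beta_p} >_0. *)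
Definition dcorr (R : realType) (n : nat) (corr : correlator R n) (X : seq (ins n)) :
  sps R[i] (ins n) void :=
  fun es os => if os is [::] then corr (X ++ es) else 0.

Definition corr_symmetric (R : realType) (n : nat) (corr : correlator R n) : Prop :=
  forall s t, perm_eq s t -> corr s = corr t.

Definition corr_unstable_vanish (R : realType) (n : nat) (corr : correlator R n) : Prop :=
  forall s, (size s < 3)%N -> corr s = 0.

(* genus zero topological recursion relation, as an identity of formal
   power series in the b's:
   <<O^{(i+1)}_a O^{(j)}_b O^{(k)}_c>> =
     sum_sigma <<O^{(i)}_a O^{(0) sigma}>> <<O^{(0)}_sigma O^{(j)}_b O^{(k)}_c>>
   with O^{(0) sigma} = sum_tau g^{sigma tau} O^{(0)}_tau. *)
Definition genus0_TRR (R : realType) (n : nat) (corr : correlator R n) : Prop :=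
  forall (a b c : 'I_n.+1) (i j k : nat),
    dcorr corr [:: (a, i.+1); (b, j); (c, k)] =
    (fun es os => \sum_(sigma < n.+1) \sum_(tau < n.+1)
       ginv corr sigma tau *
       sps_mul (dcorr corr [:: (a, i); (tau, 0%N)])
               (dcorr corr [:: (sigma, 0%N); (b, j); (c, k)]) es os).

(* L^H = sum_{k,alpha} rho^alpha_k < O^{(k)}_alpha exp(sum lambda^beta_m      *)
(*   O^{(m)}_beta) >_0, expanded: its only nonzero Taylor coefficients are   *)
(* those at one odd variable rho^alpha_k and even variables lambda^{b_i}_{m_i}*)
(* (no d_z-derivatives), equal to < O^{(k)}_alpha O^{(m_1)}_{b_1} .. >_0.    *)
Definition LH (R : realType) (n : nat) (corr : correlator R n) : FPS R n :=
  fun es os =>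
    match os with
    | [:: o] => if (o.2 == 0%N) && all (fun e : fvar n => e.2 == 0%N) es
                then corr (o.1 :: map fst es) else 0
    | _ => 0
    end.

Definition bracketC (R : realType) (n : nat) (corr : correlator R n)
  (L1 L2 : FPS R n) : FPS R n := fun es os =>
  \sum_(a < n.+1) \sum_(b < n.+1)
    ginv corr a b * sps_mul (EL a L1) (dz (EL b L2)) es os.

(* Contour observables.  oint_C J^{(1)}_L only depends on L modulo total     *)
(* d_z-derivatives (integral over the closed contour C of a total            *)
(* derivative vanishes); we identify Obs^{oint_C} with the quotient of the   *)
(* ring of local densities L by d_z-exact ones.     *)
Definition oint_C_zero (R : realType) (n : nat) (L : FPS R n) : Prop :=
  exists Kd : FPS R n, sps_wf Kd /\ L = dz Kd.

(* Maurer-Cartan equation in (Obs^{oint_C}, delta, {-,-}_C):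
   delta oint L + 1/2 {oint L, oint L}_C = oint J_{delta L + 1/2 [L,L]} = 0 *)
Definition MaurerCartan_C (R : realType) (n : nat) (corr : correlator R n)
  (L : FPS R n) : Prop :=
  oint_C_zero (sps_add (deltaS L) (sps_scale (2^-1) (bracketC corr L L))).

(* Main.v *)
Require Import Defs.
From HB Require Import structures.
From mathcomp Require Import all_boot all_algebra complex reals.
From Stdlib Require Import FunctionalExtensionality.
From mathcomp Require Import ring.
Set Implicit Arguments. Unset Strict Implicit. Unset Printing Implicit Defensive.
Import GRing.Theory.
Local Open Scope ring_scope.

Section Msum.
Variables (K : comNzRingType) (T : Type).

Fixpoint msumE (f : seq T -> seq T -> K) (s : seq T) : K :=
  match s with
  | [::] => f [::] [::]
  | x :: s' => msumE (fun l r => f (x :: l) r) s' + msumE (fun l r => f l (x :: r)) s'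
  end.

Fixpoint msumO (f : seq T -> seq T -> K) (s : seq T) : K :=
  match s with
  | [::] => f [::] [::]
  | x :: s' => msumO (fun l r => f (x :: l) r) s'
             + msumO (fun l r => (-1) ^+ size l * f l (x :: r)) s'
  end.

Lemma sum_tupleS n (F : n.+1.-tuple bool -> K) :
  \sum_(t : n.+1.-tuple bool) F t =
  \sum_(t : n.-tuple bool) (F [tuple of true :: t] + F [tuple of false :: t]).
Proof.
rewrite (reindex (fun p : bool * n.-tuple bool => [tuple of p.1 :: p.2])) /=.
  by rewrite -(pair_bigA _ (fun (b : bool) (t : n.-tuple bool) => F [tuple of b :: t])) big_bool -big_split.
exists (fun t => (thead t, [tuple of behead t])) => [[b t]|t] _ /=.
  by congr (_, _); apply: val_inj.
by apply: val_inj; case/tupleP: t.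
Qed.

Lemma sum_tuple0 (F : 0.-tuple bool -> K) : \sum_(t : 0.-tuple bool) F t = F [tuple].
Proof. by rewrite (big_pred1 [tuple]) // => t; by rewrite /= (tuple0 t); apply/esym/eqP. Qed.

Lemma msumE_tuple (s : seq T) (f : seq T -> seq T -> K) :
  \sum_(a : (size s).-tuple bool) f (mask a s) (mask (map negb a) s) = msumE f s.
Proof.
elim: s f => [|x s IH] f; first by rewrite sum_tuple0.
rewrite sum_tupleS /= big_split /=.
by rewrite -(IH (fun l r => f (x :: l) r)) -(IH (fun l r => f l (x :: r))).
Qed.


Lemma msumO_tuple (s : seq T) (f : seq T -> seq T -> K) :
  \sum_(a : (size s).-tuple bool)
     (-1) ^+ inv_count a * f (mask a s) (mask (map negb a) s) = msumO f s.
Proof.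
elim: s f => [|x s IH] f; first by rewrite sum_tuple0 /= expr0 mul1r.
rewrite sum_tupleS /= big_split /=.
rewrite -(IH (fun l r => f (x :: l) r)) -(IH (fun l r => (-1) ^+ size l * f l (x :: r))).
congr (_ + _); apply: eq_bigr => t _.
by rewrite exprD size_mask ?size_tuple // (mulrC ((-1) ^+ count id t)) -!mulrA.
Qed.


Lemma msumE_ext (f g : seq T -> seq T -> K) s :
  (forall l r, f l r = g l r) -> msumE f s = msumE g s.
Proof.
elim: s f g => [|x s IH] f g H /=; first exact: H.
by congr (_ + _); apply: IH => l r; apply: H.
Qed.


Lemma msumE0 s : msumE (fun _ _ => 0) s = 0.
Proof. by elim: s => [|x s IH] //=; rewrite IH addr0. Qed.

Lemma msumEB (f g : seq T -> seq T -> K) s :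
  msumE (fun l r => f l r - g l r) s = msumE f s - msumE g s.
Proof.
elim: s f g => [|x s IH] f g //=.
rewrite (IH (fun l r => f (x :: l) r)) (IH (fun l r => f l (x :: r))).
by rewrite opprD addrACA.
Qed.

Lemma msumED (f g : seq T -> seq T -> K) s :
  msumE (fun l r => f l r + g l r) s = msumE f s + msumE g s.
Proof.
elim: s f g => [|x s IH] f g //=.
rewrite (IH (fun l r => f (x :: l) r)) (IH (fun l r => f l (x :: r))).
by rewrite addrACA.
Qed.

Lemma msumEZ c (f : seq T -> seq T -> K) s :
  msumE (fun l r => c * f l r) s = c * msumE f s.
Proof.
elim: s f => [|x s IH] f //=.
by rewrite (IH (fun l r => f (x :: l) r)) (IH (fun l r => f l (x :: r))) mulrDr.
Qed.

Lemma msumE_swap (f : seq T -> seq T -> K) s :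
  msumE f s = msumE (fun l r => f r l) s.
Proof.
elim: s f => [|x s IH] f //=.
rewrite (IH (fun l r => f (x :: l) r)) (IH (fun l r => f l (x :: r))).
by rewrite addrC.
Qed.

Lemma msumO_size (f : seq T -> seq T -> K) s :
  (forall l r, (size l + size r = size s)%N -> f l r = 0) -> msumO f s = 0.
Proof.
elim: s f => [|x s IH] f H /=; first exact: H.
rewrite !IH ?addr0 // => l r Hs.
  by rewrite H ?mulr0 //= addnS Hs.
by rewrite H //= addSn Hs.
Qed.

End Msum.

Lemma msumE_map (K : comNzRingType) (T T' : Type) (phi : T -> T') (h : seq T' -> seq T' -> K) s :
  msumE (fun l r => h (map phi l) (map phi r)) s = msumE h (map phi s).
Proof.
elim: s h => [|x s IH] h //=.
by rewrite -(IH (fun l r => h (phi x :: l) r)) -(IH (fun l r => h l (phi x :: r))).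
Qed.


Section MsumEq.
Variables (K : comNzRingType) (T : eqType).

Definition symf (f : seq T -> seq T -> K) :=
  forall l l' r r', perm_eq l l' -> perm_eq r r' -> f l r = f l' r'.

Lemma symf_l (f : seq T -> seq T -> K) x : symf f -> symf (fun l r => f (x :: l) r).
Proof. by move=> H l l' r r' Hl Hr; apply: H; rewrite ?perm_cons. Qed.

Lemma symf_r (f : seq T -> seq T -> K) x : symf f -> symf (fun l r => f l (x :: r)).
Proof. by move=> H l l' r r' Hl Hr; apply: H; rewrite ?perm_cons. Qed.

Lemma msumE_swap2 (f : seq T -> seq T -> K) x y s :
  symf f -> msumE f (x :: y :: s) = msumE f (y :: x :: s).
Proof.
move=> Hf /=.
have P2 : forall l, perm_eq (x :: y :: l) (y :: x :: l).
  by move=> l; rewrite (perm_catCA [:: x] [:: y] l).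
rewrite (msumE_ext _ (g := fun l r => f (y :: x :: l) r)); last first.
  by move=> l r; apply: Hf.
rewrite [msumE (fun l r => f l (x :: y :: r)) s](msumE_ext _ (g := fun l r => f l (y :: x :: r))); last first.
  by move=> l r; apply: Hf.
by rewrite [LHS]addrACA.
Qed.

Lemma msumE_front (f : seq T -> seq T -> K) x s :
  symf f -> x \in s -> msumE f s = msumE f (x :: rem x s).
Proof.
elim: s f => [|y s IH] f Hf //.
case: (eqVneq y x) => [->|Hne]; first by rewrite /= eqxx.
rewrite in_cons eq_sym (negbTE Hne) /= (negbTE Hne) => Hx.
rewrite (IH _ (symf_l y Hf) Hx) (IH _ (symf_r y Hf) Hx).
exact: (@msumE_swap2 f y x (rem x s) Hf).
Qed.

End MsumEq.


Section Main.
Variables (R : realType) (n : nat) (corr : correlator R n).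
Hypothesis Hsym : corr_symmetric corr.
Hypothesis Hvan : corr_unstable_vanish corr.

Local Notation K := (R[i]).

Definition wt (s : seq (fvar n)) : nat := sumn (map snd s).
Definition zall (s : seq (fvar n)) : seq (fvar n) := map (fun e => (e.1, 0%N)) s.
Definition up (x : ins n) : ins n := (x.1, x.2.+1).

Lemma allZ (s : seq (fvar n)) : all (fun e : fvar n => e.2 == 0%N) s = (wt s == 0%N).
Proof. by elim: s => [|x s IH] //=; rewrite IH /wt /= addn_eq0. Qed.

Lemma wt_cons x s : wt (x :: s) = (x.2 + wt s)%N.
Proof. by []. Qed.

Lemma wt_zall s : wt (zall s) = 0%N.
Proof. by elim: s => [|x s IH] //=; rewrite wt_cons IH. Qed.

Lemma fst_zall s : map fst (zall s) = map fst s.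
Proof. by elim: s => [|x s IH] //=; rewrite IH. Qed.

Lemma size_zall s : size (zall s) = size s.
Proof. exact: size_map. Qed.

Lemma zall_id s : wt s = 0%N -> zall s = s.
Proof.
elim: s => [|[v m] s IH] //=; rewrite wt_cons /= => /eqP; rewrite addn_eq0.
by case/andP => /eqP -> /eqP /IH ->.
Qed.

Lemma us0 s : wt s = 0%N -> unshifts s = [::].
Proof.
elim: s => [|[v m] s IH] //=; rewrite wt_cons /= => /eqP; rewrite addn_eq0.
by case/andP => /eqP -> /eqP /IH ->.
Qed.

Lemma us1 s : wt s = 1%N -> unshifts s = [:: zall s].
Proof.
elim: s => [|[v m] s IH] //=; rewrite wt_cons /=.
case: m => [|[|m]] //= H.
- by rewrite (IH H).
- by rewrite (us0 (_ : wt s = 0%N)) ?zall_id //; move: H => [].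
Qed.

Lemma usw s s' : s' \in unshifts s -> (wt s' + 1 = wt s)%N.
Proof.
elim: s s' => [|[v m] s IH] s' //=.
rewrite mem_cat => /orP [|/mapP [t Ht ->]].
  case: m => [|m] //=; rewrite inE => /eqP ->.
  by rewrite !wt_cons /= addn1 addSn.
by rewrite !wt_cons -addnA (IH _ Ht).
Qed.

Lemma us_sum (h : seq (fvar n) -> K) s :
  (forall t, wt t != 0%N -> h t = 0) ->
  \sum_(t <- unshifts s) h t = if wt s == 1%N then h (zall s) else 0.
Proof.
move=> Hh.
case E0: (wt s == 0%N).
  by rewrite (us0 (eqP E0)) big_nil (eqP E0).
case E1: (wt s == 1%N).
  by rewrite (us1 (eqP E1)) big_seq1.
rewrite big1_seq // => t /andP [_ /usw Ht]; apply: Hh.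
apply/eqP => H; move: Ht; rewrite H add0n => H1.
by rewrite -H1 eqxx in E1.
Qed.


Lemma LH_1 es (o : fvar n) :
  LH corr es [:: o] = if (o.2 == 0%N) && (wt es == 0%N) then corr (o.1 :: map fst es) else 0.
Proof. by rewrite /LH allZ. Qed.

Lemma LH_size es os : size os != 1%N -> LH corr es os = 0.
Proof. by case: os => [|o [|o' os]]. Qed.

Definition A (a : 'I_n.+1) : FPS R n := fun l l' => LH corr (((a, 0%N), 0%N) :: l) l'.

Lemma A_1 a l (o : fvar n) :
  A a l [:: o] = if (wt l == 0%N) && (o.2 == 0%N) then corr (o.1 :: (a, 0%N) :: map fst l) else 0.
Proof. by rewrite /A LH_1 wt_cons add0n andbC. Qed.

Lemma A_size a l l' : size l' != 1%N -> A a l l' = 0.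
Proof. exact: LH_size. Qed.

Lemma dz0 : @dz R n (fun _ _ => 0) = (fun _ _ => 0).
Proof.
apply: functional_extensionality => es; apply: functional_extensionality => os.
by rewrite /dz !big1 ?addr0.
Qed.

Lemma iter_dz0 k : iter k (@dz R n) (fun _ _ => 0) = (fun _ _ => 0).
Proof. by elim: k => [|k IH] //=; rewrite IH dz0. Qed.

Lemma dE_LH a k : sps_dE ((a, 0%N), k.+1) (LH corr) = (fun _ _ => 0).
Proof.
apply: functional_extensionality => es; apply: functional_extensionality => os.
by rewrite /sps_dE /LH; case: os => [|o [|o' os]] //=; rewrite andbF.
Qed.

Lemma EL_LH a : EL a (LH corr) = A a.
Proof.
apply: functional_extensionality => es; apply: functional_extensionality => os.
rewrite /EL big_ord_recl /= expr0 mul1r big1 ?addr0 // => i _.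
by rewrite /bump /= add1n dE_LH iter_dz0 dz0 mulr0.
Qed.

Lemma dA b r r' :
  dz (A b) r r' = (if wt r == 1%N then A b (zall r) r' else 0)
                + (if wt r' == 1%N then A b r (zall r') else 0).
Proof.
rewrite /dz !us_sum //.
  case=> [|o [|o' t]] Ht; try by rewrite A_size.
  by rewrite A_1; move: Ht; rewrite wt_cons addn0 => /negbTE ->; rewrite andbF.
case: r' => [|o [|o' r']] t Ht; try by rewrite A_size.
by rewrite A_1 (negbTE Ht).
Qed.

Lemma sps_mul_msum (E O : Type) (F G : sps K E O) es os :
  sps_mul F G es os = msumE (fun l r => msumO (fun l' r' => F l l' * G r r') os) es.
Proof.
rewrite /sps_mul -msumE_tuple; apply: eq_bigr => a _.
rewrite -msumO_tuple; apply: eq_bigr => b _.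
by rewrite mulrA.
Qed.

Lemma bracket_eq es os :
  bracketC corr (LH corr) (LH corr) es os =
  \sum_(a < n.+1) \sum_(b < n.+1) ginv corr a b *
     msumE (fun l r => msumO (fun l' r' => A a l l' * dz (A b) r r') os) es.
Proof.
rewrite /bracketC; apply: eq_bigr => a _; apply: eq_bigr => b _.
by rewrite !EL_LH sps_mul_msum.
Qed.


Definition Kd : FPS R n := fun es os =>
  match os with
  | [:: o1; o2] =>
      if (wt es == 0%N) && (o1.2 == 0%N) && (o2.2 == 0%N)
      then 2^-1 * (corr (up o1.1 :: o2.1 :: map fst es) - corr (o1.1 :: up o2.1 :: map fst es))
      else 0
  | _ => 0
  end.

Lemma Kd_size es os : size os != 2%N -> Kd es os = 0.
Proof. by case: os => [|o [|o' [|o'' os]]]. Qed.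

Lemma dzKd es os :
  dz Kd es os = (if wt es == 1%N then Kd (zall es) os else 0)
              + (if wt os == 1%N then Kd es (zall os) else 0).
Proof.
rewrite /dz !us_sum //.
  case=> [|o1 [|o2 [|o3 t]]] Ht //=.
  move: Ht; rewrite !wt_cons addn0.
  by case: (o1.2) => [|?]; case: (o2.2) => [|?] //=; rewrite andbF.
by case: os => [|o1 [|o2 [|o3 os]]] t Ht //=; rewrite (negbTE Ht).
Qed.

Lemma corr_swap x y s : corr (x :: y :: s) = corr (y :: x :: s).
Proof. by apply: Hsym; rewrite (perm_catCA [:: x] [:: y] s). Qed.

Lemma corr_perm2 x y s t : perm_eq s t -> corr (x :: y :: s) = corr (x :: y :: t).
Proof. by move=> H; apply: Hsym; rewrite !perm_cons. Qed.

Lemma ginv_sym a b : ginv corr a b = ginv corr b a.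
Proof.
have HT : (gmet corr)^T = gmet corr.
  by apply/matrixP => i j; rewrite !mxE corr_swap.
by rewrite /ginv -[in RHS]HT -trmx_inv mxE.
Qed.

Lemma msumO_nil (T : Type) (f : seq T -> seq T -> K) : msumO f [::] = f [::] [::].
Proof. by []. Qed.

Lemma TRR3 (HTRR : genus0_TRR corr) (u v x : ins n) E0 :
  \sum_(a < n.+1) \sum_(b < n.+1) ginv corr a b *
    msumE (fun L R => corr (u :: (a, 0%N) :: L) * corr (v :: (b, 0%N) :: x :: R)) E0
  = corr (up u :: v :: x :: E0).
Proof.
case: u => [ua ui]; case: v => [vb vj]; case: x => [xc xk].
have := f_equal (fun F => F E0 [::]) (HTRR ua vb xc ui vj xk).
rewrite /dcorr /= => ->.
rewrite exchange_big /=; apply: eq_bigr => b _; apply: eq_bigr => a _.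
rewrite sps_mul_msum ginv_sym; congr (_ * _).
by apply: msumE_ext => l r /=; congr (_ * _); exact: corr_swap.
Qed.


Lemma TRR2 (HTRR : genus0_TRR corr) (u v : ins n) E :
  \sum_(a < n.+1) \sum_(b < n.+1) ginv corr a b *
    msumE (fun L R => corr (u :: (a, 0%N) :: L) * corr (v :: (b, 0%N) :: R)) E
  = corr (up u :: v :: E) + corr (u :: up v :: E).
Proof.
case: E => [|x E0].
  rewrite !Hvan // addr0 big1 // => a _; rewrite big1 // => b _ /=.
  by rewrite (Hvan (s := [:: _; _])) // mul0r mulr0.
rewrite /=.
under eq_bigr => a _ do under eq_bigr => b _ do rewrite mulrDr.
under eq_bigr => a _ do rewrite big_split /=.
rewrite big_split /= TRR3 // addrC; congr (_ + _).
have E1 : forall (a b : 'I_n.+1), msumE (fun L R => corr (u :: (a,0%N) :: x :: L) * corr (v :: (b,0%N) :: R)) E0 = msumE (fun L R => corr (v :: (b,0%N) :: L) * corr (u :: (a,0%N) :: x :: R)) E0.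
  by move=> a b; rewrite msumE_swap; apply: msumE_ext => l r; exact: mulrC.
rewrite exchange_big /=.
under eq_bigr => b _ do under eq_bigr => a _ do rewrite ginv_sym E1.
by rewrite TRR3 // corr_swap.
Qed.


Lemma size_rem_at (T : Type) i (s : seq T) : (i < size s)%N -> size (rem_at i s) = (size s).-1.
Proof.
move=> H; rewrite /rem_at size_cat size_take size_drop H.
by case: (size s) H => // m; rewrite ltnS => H; rewrite subSS subnKC.
Qed.

Lemma delta_size es os : size os != 2%N -> deltaS (LH corr) es os = 0.
Proof.
move=> Hs; rewrite /deltaS big1 // => i _.
case: (nth _ os i) => [[a k] [|m]]; first by rewrite mulr0.
rewrite LH_size ?mulr0 // size_rem_at //.
by move: Hs; case: (size os) => [|[|[|?]]].
Qed.

Lemma delta_2 es (u v : ins n) p q :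
  deltaS (LH corr) es [:: (u, p); (v, q)] =
    (if (p == 1%N) && (q == 0%N) && (wt es == 0%N) then corr (v :: up u :: map fst es) else 0)
  - (if (p == 0%N) && (q == 1%N) && (wt es == 0%N) then corr (u :: up v :: map fst es) else 0).
Proof.
case: u => [c j]; case: v => [d l].
rewrite /deltaS big_ord_recl big_ord_recl big_ord0 addr0 /=.
rewrite /bump /= expr0 expr1 mul1r mulN1r.
case: p => [|[|p]]; case: q => [|[|q]] //=; rewrite ?LH_1 /= ?wt_cons ?add0n ?addn0 ?oppr0 ?addr0 ?add0r ?allZ //.
Qed.


Lemma dA_size b r r' : size r' != 1%N -> dz (A b) r r' = 0.
Proof. by move=> H; rewrite dA !A_size ?size_zall // !if_same addr0. Qed.

Lemma msumO_2 (T : Type) (f : seq T -> seq T -> K) x y :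
  msumO f [:: x; y] = f [:: x; y] [::] + f [:: x] [:: y] - f [:: y] [:: x] + f [::] [:: x; y].
Proof. by rewrite /= expr0 expr1 !mul1r mulN1r !addrA. Qed.

Lemma msumE_ext_wt (f g : seq (fvar n) -> seq (fvar n) -> K) s :
  (forall l r, (wt l + wt r = wt s)%N -> f l r = g l r) -> msumE f s = msumE g s.
Proof.
elim: s f g => [|x s IH] f g H /=; first exact: H.
congr (_ + _); apply: IH => l r Hlr; apply: H; rewrite !wt_cons -Hlr.
  by rewrite addnA.
by rewrite addnCA.
Qed.

Lemma summand_val a b l r u v p q :
  A a l [:: (u, p)] * dz (A b) r [:: (v, q)] =
  if (wt l == 0%N) && (p == 0%N) && (((wt r == 1%N) && (q == 0%N)) || ((wt r == 0%N) && (q == 1%N)))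
  then corr (u :: (a, 0%N) :: map fst l) * corr (v :: (b, 0%N) :: map fst r) else 0.
Proof.
rewrite dA !A_1 /= wt_zall fst_zall.
case: (wt l) => [|wl]; case: p => [|p]; case: (wt r) => [|[|w]]; case: q => [|[|q]] /=;
  by rewrite ?addr0 ?mulr0 ?mul0r ?add0r.
Qed.


Definition Sv (a b : 'I_n.+1) (l r : seq (fvar n)) (u : ins n) (p : nat) (v : ins n) (q : nat) : K :=
  if (wt l == 0%N) && (p == 0%N) && (((wt r == 1%N) && (q == 0%N)) || ((wt r == 0%N) && (q == 1%N)))
  then corr (u :: (a, 0%N) :: map fst l) * corr (v :: (b, 0%N) :: map fst r) else 0.

Lemma bsum_zero (F : 'I_n.+1 -> 'I_n.+1 -> seq (fvar n) -> seq (fvar n) -> K) es :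
  (forall a b l r, (wt l + wt r = wt es)%N -> F a b l r = 0) ->
  \sum_(a < n.+1) \sum_(b < n.+1) ginv corr a b * msumE (F a b) es = 0.
Proof.
move=> H; rewrite big1 // => a _; rewrite big1 // => b _.
by rewrite (msumE_ext_wt (g := fun _ _ => 0)) ?msumE0 ?mulr0 // => l r /H.
Qed.

Lemma wt_perm l l' : perm_eq l l' -> wt l = wt l'.
Proof. by move=> H; apply: perm_sumn; apply: perm_map. Qed.

Lemma main_eq (HTRR : genus0_TRR corr) es os :
  deltaS (LH corr) es os + 2^-1 * bracketC corr (LH corr) (LH corr) es os = dz Kd es os.
Proof.
rewrite bracket_eq dzKd.
have [Hs|Hs] := eqVneq (size os) 2%N; last first.
  rewrite delta_size // !Kd_size ?size_zall // !if_same big1 ?mulr0 ?addr0 // => a _.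
  rewrite big1 // => b _.
  rewrite (msumE_ext (g := fun _ _ => 0)) ?msumE0 ?mulr0 // => l r.
  apply: msumO_size => l' r' Hlr.
  have [H1|H1] := eqVneq (size l') 1%N; last by rewrite A_size ?mul0r.
  rewrite dA_size ?mulr0 //; apply/eqP => H2.
  by move: Hs; rewrite -Hlr H1 H2 eqxx.
case: os Hs => [|[u p] [|[v q] [|]]] // _.
have Hsum : forall a b, msumE (fun l r => msumO (fun l' r' => A a l l' * dz (A b) r r') [:: (u,p); (v,q)]) es
  = msumE (fun l r => Sv a b l r u p v q - Sv a b l r v q u p) es.
  move=> a b; apply: msumE_ext => l r.
  rewrite msumO_2 A_size // (A_size a l (l' := [::])) // !mul0r add0r addr0.
  by rewrite !summand_val.
under eq_bigr => a _ do under eq_bigr => b _ do rewrite Hsum.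
clear Hsum.
rewrite delta_2 /Kd /= wt_zall fst_zall !wt_cons /= addn0.
case: p => [|[|p]]; case: q => [|[|q]] /=.
-
  have [W1|W1] := eqVneq (wt es) 1%N; last first.
    rewrite bsum_zero ?mulr0 ?subr0 ?addr0 // => a b l r.
    rewrite /Sv; case: (wt l) => [|wl]; case: (wt r) => [|[|wr]] /= H; rewrite ?subr0 //.
    by move: W1; rewrite -H.
  rewrite subr0 add0r addr0.
  have : ~~ all (fun e : fvar n => e.2 == 0%N) es by rewrite allZ W1.
  case/allPn => x Hx Hx2.
  have Hp := perm_to_rem Hx.
  set es0 := rem x es in Hp *.
  have Hw := wt_perm Hp; rewrite wt_cons W1 in Hw.
  have [Hx1 Hw0] : x.2 = 1%N /\ wt es0 = 0%N.
    by move: Hx2 Hw; case: (x.2) => [|[|?]] //=; case: (wt es0).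
  have Hab : forall a b, msumE (fun l r => Sv a b l r u 0 v 0 - Sv a b l r v 0 u 0) es =
     msumE (fun L R => corr (u :: (a, 0%N) :: L) * corr (v :: (b, 0%N) :: x.1 :: R)) (map fst es0)
   - msumE (fun L R => corr (v :: (a, 0%N) :: L) * corr (u :: (b, 0%N) :: x.1 :: R)) (map fst es0).
    move=> a b.
    pose G l r := if (wt l == 0%N) && (wt r == 1%N) then
       corr (u :: (a, 0%N) :: map fst l) * corr (v :: (b, 0%N) :: map fst r)
     - corr (v :: (a, 0%N) :: map fst l) * corr (u :: (b, 0%N) :: map fst r) else 0.
    rewrite (msumE_ext (g := G)); last first.
      move=> l r; rewrite /Sv /G; case: (wt l) => [|wl]; case: (wt r) => [|[|wr]] //=.
      all: try by rewrite subr0.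
    have HG : symf G.
      move=> l l' r r' Hl Hr; rewrite /G (wt_perm Hl) (wt_perm Hr).
      by rewrite !(corr_perm2 _ _ (perm_map fst Hl)) !(corr_perm2 _ _ (perm_map fst Hr)).
    rewrite (msumE_front HG Hx) /=.
    rewrite (msumE_ext (g := fun _ _ => 0)) ?msumE0 ?add0r; last first.
      by move=> l r; rewrite /G wt_cons Hx1.
    rewrite (msumE_ext_wt (s := es0) (g := fun l r =>
       corr (u :: (a, 0%N) :: map fst l) * corr (v :: (b, 0%N) :: x.1 :: map fst r)
     - corr (v :: (a, 0%N) :: map fst l) * corr (u :: (b, 0%N) :: x.1 :: map fst r))); last first.
      move=> l r; rewrite Hw0 => /eqP; rewrite addn_eq0 => /andP [/eqP Hl /eqP Hr].
      by rewrite /G wt_cons Hx1 Hl Hr.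
    rewrite msumEB.
    by rewrite -(msumE_map fst (fun L R => corr (u :: (a, 0%N) :: L) * corr (v :: (b, 0%N) :: x.1 :: R)))
       -(msumE_map fst (fun L R => corr (v :: (a, 0%N) :: L) * corr (u :: (b, 0%N) :: x.1 :: R))).
  under eq_bigr => a _ do under eq_bigr => b _ do rewrite Hab mulrBr.
  under eq_bigr => a _ do rewrite sumrB.
  rewrite sumrB !TRR3 //; congr (_ * _).
  have Hpm := perm_map fst Hp.
  by rewrite !(corr_perm2 _ _ Hpm) [corr (u :: up v :: _)]corr_swap.
-
  rewrite if_same add0r.
  have [W0|W0] := eqVneq (wt es) 0%N; last first.
    rewrite /= ?subr0 ?oppr0 ?add0r bsum_zero ?mulr0 // => a b l r.
    rewrite /Sv; case: (wt l) => [|wl]; case: (wt r) => [|[|wr]] /= H; rewrite ?subr0 //.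
    by move: W0; rewrite -H.
  have Hab : forall a b, msumE (fun l r => Sv a b l r u 0 v 1 - Sv a b l r v 1 u 0) es =
     msumE (fun L R => corr (u :: (a, 0%N) :: L) * corr (v :: (b, 0%N) :: R)) (map fst es).
    move=> a b; rewrite -(msumE_map fst (fun L R => corr (u :: (a, 0%N) :: L) * corr (v :: (b, 0%N) :: R))).
    apply: msumE_ext_wt => l r; rewrite W0 => /eqP; rewrite addn_eq0 => /andP [/eqP Hl /eqP Hr].
    by rewrite /Sv Hl Hr /= subr0.
  under eq_bigr => a _ do under eq_bigr => b _ do rewrite Hab.
  rewrite TRR2 //=.
  by field.
-
  rewrite !if_same !subr0 !addr0 add0r bsum_zero ?mulr0 // => a b l r _.
  by rewrite /Sv /= !andbF subr0.
-
  rewrite if_same add0r.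
  have [W0|W0] := eqVneq (wt es) 0%N; last first.
    rewrite /= ?subr0 ?oppr0 ?add0r bsum_zero ?mulr0 // => a b l r.
    rewrite /Sv; case: (wt l) => [|wl]; case: (wt r) => [|[|wr]] /= H; rewrite ?subr0 ?sub0r //.
    by move: W0; rewrite -H.
  have Hab : forall a b, msumE (fun l r => Sv a b l r u 1 v 0 - Sv a b l r v 0 u 1) es =
     - msumE (fun L R => corr (v :: (a, 0%N) :: L) * corr (u :: (b, 0%N) :: R)) (map fst es).
    move=> a b; rewrite -(msumE_map fst (fun L R => corr (v :: (a, 0%N) :: L) * corr (u :: (b, 0%N) :: R))).
    rewrite -[RHS]sub0r -(msumE0 _ es) -msumEB.
    apply: msumE_ext_wt => l r; rewrite W0 => /eqP; rewrite addn_eq0 => /andP [/eqP Hl /eqP Hr].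
    by rewrite /Sv Hl Hr /=.
  under eq_bigr => a _ do under eq_bigr => b _ do rewrite Hab mulrN.
  under eq_bigr => a _ do rewrite sumrN.
  rewrite sumrN TRR2 //= subr0.
  rewrite (corr_swap (up v)) (corr_swap v).
  by field.
- rewrite !if_same !subr0 !addr0 add0r bsum_zero ?mulr0 // => a b l r _.
  by rewrite /Sv /= !andbF subr0.
- rewrite !if_same !subr0 !addr0 add0r bsum_zero ?mulr0 // => a b l r _.
  by rewrite /Sv /= !andbF subr0.
- rewrite !if_same !subr0 !addr0 add0r bsum_zero ?mulr0 // => a b l r _.
  by rewrite /Sv /= !andbF subr0.
- rewrite !if_same !subr0 !addr0 add0r bsum_zero ?mulr0 // => a b l r _.
  by rewrite /Sv /= !andbF subr0.
- rewrite !if_same !subr0 !addr0 add0r bsum_zero ?mulr0 // => a b l r _.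
  by rewrite /Sv /= !andbF subr0.
Qed.

Lemma Kd_wf : sps_wf Kd.
Proof.
split.
  move=> es es' os H; case: os => [|o1 [|o2 [|o3 os]]] //=.
  by rewrite (wt_perm H) !(corr_perm2 _ _ (perm_map fst H)).
move=> es pre o1 o2 post.
case: pre => [|p1 [|p2 [|p3 pre]]] /=; try by rewrite oppr0.
case: post => [|p post] /=; last by rewrite oppr0.
rewrite -!andbA [(o2.2 == 0%N) && _]andbC.
case: ifP => _; last by rewrite oppr0.
by rewrite (corr_swap (up o2.1)) (corr_swap o2.1) -mulrN opprB.
Qed.

End Main.

Theorem mainTheorem7 (R : realType) (n : nat) (corr : correlator R n)
  (Hsym : corr_symmetric corr)
  (Hvan : corr_unstable_vanish corr)
  (Hnondeg : gmet corr \in unitmx)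
  (HTRR : genus0_TRR corr) :
  MaurerCartan_C corr (LH corr).
Proof.
exists (Kd corr); split; first exact: (Kd_wf Hsym).
apply: functional_extensionality => es; apply: functional_extensionality => os.
exact: (main_eq Hsym Hvan HTRR es os).
Qed.
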